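(* Let $1<p<\infty$, let $E$ be a separable Banach space, and let $\mu_1,\mu_2$ be two $\sigma$-additive $\sigma$-finite separable measures on the same measurable space $\Omega$ that are mutually absolutely continuous. Let $G$ be a countable amenable group and $\{\alpha_g\}_{g\in G}$ a group of invertible measurable maps of $\Omega$ preserving the (common) class of null sets, acting metrically freely. For $i=1,2$ let $D_i=L^p_{\mu_i}(\Omega,E)$, let $A_i=L^\infty_{\mu_1}(\Omega,L(E))\ (=L^\infty_{\mu_2}(\Omega,L(E)))$ act on $D_i$ by multiplication, let $T^i_g$ be the isometries $(T^i_gf)(x)=\rho^i_g(x)^{1/p}f(\alpha_g^{-1}(x))$ of $D_i$, and let $B(A_i,T^i_g)$ be the closed subalgebra of $L(D_i)$ generated by $A_i$ and $\{T^i_g\}$. Then $B(A_1,T^1_g)$ and $B(A_2,T^2_g)$ are isomorphic as Banach algebras, via the isomorphism determined by the natural identification $A_1\cong A_2$ and $T^1_g\mapsto T^2_g$; i.e. for every finite $F$ and $a_g\in A_1$, $\|\sum_{g\in F}a_gT^1_g\|_{L(D_1)}=\|\sum_{g\in F}a_gT^2_g\|_{L(D_2)}$.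
   Context: $\rho^i_g$ is the Radon–Nikodym derivative of $\Delta\mapsto\mu_i(\alpha_g^{-1}(\Delta))$ with respect to $\mu_i$; $\alpha_{gh}=\alpha_g\circ\alpha_h$, $\alpha_e=\mathrm{id}$. $G$ acts metrically freely if for every finite $\{g_1,\dots,g_k\}\subset G$ and measurable $\Delta$ with $\mu_1(\Delta)>0$ there is measurable $\Delta'\subset\Delta$, $\mu_1(\Delta')>0$, with $\mu_1(\alpha_{g_i}(\Delta')\cap\alpha_{g_j}(\Delta'))=0$ for $i\neq j$ (equivalently for $\mu_2$, since the null sets coincide). *)

(* Defs.v *)
From HB Require Import structures.
From mathcomp Require Import all_boot all_order all_algebra.
From mathcomp Require Import all_classical all_reals all_analysis.
Set Implicit Arguments. Unset Strict Implicit. Unset Printing Implicit Defensive.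
Import Order.TTheory GRing.Theory Num.Theory.
Import numFieldNormedType.Exports.
Local Open Scope classical_set_scope.
Local Open Scope ring_scope.

Section Defs.
Context {R : realType}.

Definition separable_space (E : normedModType R) : Prop :=
  exists u : nat -> E, closure (range u) = setT.

(** Borel measurability of a Banach-space-valued function
    (for separable E this is strong measurability, Pettis). *)
Definition borel_measurable {d} {T : measurableType d} {E : normedModType R}
    (f : T -> E) : Prop :=
  forall U : set E, open U -> measurable (f @^-1` U).

Definition Lpnorm {d} {T : measurableType d} {E : normedModType R}
    (mu : {measure set T -> \bar R}) (p : R) (f : T -> E) : \bar R :=
  Lnorm mu p%:E (fun x => (`|f x|)%:E).

Definition in_Lp {d} {T : measurableType d} {E : normedModType R}
    (mu : {measure set T -> \bar R}) (p : R) (f : T -> E) : Prop :=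
  borel_measurable f /\ (Lpnorm mu p f < +oo)%E.

Definition in_Linf_op {d} {T : measurableType d} {E : normedModType R}
    (mu : {measure set T -> \bar R}) (a : T -> E -> E) : Prop :=
  [/\ (forall x (c : R) (u v : E), a x (c *: u + v) = c *: a x u + a x v),
      (forall e : E, borel_measurable (fun x => a x e)) &
      exists M : R, {ae mu, forall x, forall e : E, `|a x e| <= M * `|e|}].

(** Separable measure: the measure algebra (sets of finite measure with the
    distance mu(A symmetric-difference B)) has a countable dense subset. *)
Definition separable_measure {d} {T : measurableType d}
    (mu : {measure set T -> \bar R}) : Prop :=
  exists S : nat -> set T, (forall n, measurable (S n)) /\
    forall A, measurable A -> (mu A < +oo)%E -> forall e : R, 0 < e ->
      exists n, (mu ((A `\` S n) `|` (S n `\` A)) < e%:E)%E.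

Definition bounded_fun_on (G : Type) (f : G -> R) : Prop :=
  exists M : R, forall g, `|f g| <= M.

Definition amenable (G : groupType) : Prop :=
  exists m : (G -> R) -> R,
    [/\ (forall (f h : G -> R) (c : R), bounded_fun_on f -> bounded_fun_on h ->
           m (fun x => c * f x + h x) = c * m f + m h),
        (forall f : G -> R, bounded_fun_on f -> (forall x, 0 <= f x) -> 0 <= m f),
        m (fun _ => 1) = 1 &
        (forall (f : G -> R) (g : G), bounded_fun_on f ->
           m (fun x => f (monoid.mul g x)) = m f)].

Definition is_RN_deriv {d} {T : measurableType d}
    (mu : {measure set T -> \bar R}) (alpha : T -> T) (rho : T -> R) : Prop :=
  [/\ measurable_fun setT rho, (forall x, 0 <= rho x) &
      forall D, measurable D -> mu (alpha @^-1` D) = (\int[mu]_(x in D) (rho x)%:E)%E].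

Definition metrically_free {d} {T : measurableType d} (G : groupType)
    (mu : {measure set T -> \bar R}) (alpha : G -> T -> T) : Prop :=
  forall (s : seq G) (D : set T), measurable D -> (0 < mu D)%E ->
    exists D' : set T, [/\ measurable D', D' `<=` D, (0 < mu D')%E &
      forall g h, g \in s -> h \in s -> g != h ->
        mu ((alpha g @` D') `&` (alpha h @` D')) = 0%E].

Definition cross_op {d} {T : measurableType d} {E : normedModType R}
    (G : groupType) (p : R) (alpha : G -> T -> T) (rho : G -> T -> R)
    (s : seq G) (a : G -> T -> E -> E) (f : T -> E) : T -> E :=
  fun x => \sum_(g <- s) a g x ((rho g x) `^ p^-1 *: f (alpha (monoid.inv g) x)).

Definition Lp_opnorm {d} {T : measurableType d} {E : normedModType R}
    (mu : {measure set T -> \bar R}) (p : R) (S : (T -> E) -> (T -> E)) : \bar R :=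
  ereal_sup [set Lpnorm mu p (S f) | f in [set f | in_Lp mu p f /\ (Lpnorm mu p f <= 1)%E]].

End Defs.

(* Main.v *)
Require Import Defs.
From HB Require Import structures.
From mathcomp Require Import all_boot all_order all_algebra.
From mathcomp Require Import all_classical all_reals all_analysis.
From mathcomp Require Import measurable_realfun.
Set Implicit Arguments. Unset Strict Implicit. Unset Printing Implicit Defensive.
Import Order.TTheory GRing.Theory Num.Theory.
Import numFieldNormedType.Exports.
Local Open Scope classical_set_scope.
Local Open Scope ring_scope.
From mathcomp Require Import lra.
Local Open Scope ereal_scope.
Section dens.
Context d (T : measurableType d) (R : realType).
Import HBNNSimple.

Lemma dens (mu nu : {measure set T -> \bar R}) (g0 : T -> R) :
  (forall x, 0 <= g0 x)%R -> measurable_fun [set: T] g0 ->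
  (forall A, measurable A -> nu A = \int[mu]_(x in A) (g0 x)%:E) ->
  forall (f : T -> \bar R) E, (forall x, 0 <= f x) -> measurable E -> measurable_fun E f ->
  \int[mu]_(x in E) (f x * (g0 x)%:E) = \int[nu]_(x in E) f x.
Proof.
move=> g00 mg0 hnu f E f0 mE mf; set g := fun x => (g0 x)%:E.
have mg : measurable_fun [set: T] g by exact/measurable_EFinP.
have gge0 x : 0 <= g x by rewrite lee_fin.
pose h := nnsfun_approx mE mf.
have -> : \int[nu]_(x in E) f x =
    lim (\int[nu]_(x in E) (EFin \o h n) x @[n --> \oo]).
  have fE x : E x -> f x = lim ((EFin \o h n) x @[n --> \oo]).
    by move=> Ex; apply/esym/cvg_lim => //; exact: cvg_nnsfun_approx.
  under eq_integral => x /[!inE] /fE -> //.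
  apply: monotone_convergence => //.
  - move=> n; apply/measurable_EFinP.
    by apply: (measurable_funS measurableT) => //; exact/measurable_funP.
  - by move=> n x Ex //=; rewrite lee_fin.
  - by move=> x Ex a b ab; rewrite lee_fin; exact/lefP/nd_nnsfun_approx.
have -> : \int[mu]_(x in E) (f x * g x) =
    lim (\int[mu]_(x in E) ((EFin \o h n) \* g) x @[n --> \oo]).
  have fg x : E x -> f x * g x = lim (((EFin \o h n) \* g) x @[n --> \oo]).
    by move=> Ex; apply/esym/cvg_lim => //; apply: cvgeZr;
      [by []|exact: cvg_nnsfun_approx].
  under eq_integral => x /[!inE] /fg -> //.
  apply: monotone_convergence => [//| | |].
  - move=> n; apply/emeasurable_funM; apply/measurable_funTS => //.
      exact/measurable_EFinP.
  - by move=> n x Ex /=; rewrite mule_ge0 ?lee_fin.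
  - by move=> x Ex a b ab/=; rewrite lee_wpmul2r ?lee_fin//; exact/lefP/nd_nnsfun_approx.
suff suf n : \int[mu]_(x in E) ((EFin \o h n) x * g x) =
    \int[nu]_(x in E) (EFin \o h n) x.
  by under eq_fun do rewrite suf.
transitivity (\int[nu]_(x in E)
   (\sum_(y \in range (h n)) (y * \1_(h n @^-1` [set y]) x)%:E)); last first.
  by apply: eq_integral => t tE; rewrite /= fimfunE -fsumEFin.
have indich m r : measurable_fun E (fun x => (r * \1_(h m @^-1` [set r]) x)%:E).
  by apply: (measurable_comp measurableT) => //; exact: measurable_funM.
rewrite ge0_integral_fsum//; last by move=> m y Ey; exact: nnfun_muleindic_ge0.
transitivity (\int[mu]_(x in E) (\sum_(y \in range (h n))
    (y * \1_(h n @^-1` [set y]) x)%:E * g x)).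
  under [RHS]eq_integral => x xE.
    rewrite -ge0_mule_fsuml => [|y]; last exact: nnfun_muleindic_ge0.
    rewrite fsumEFin // -(fimfunE _ x); over.
  by [].
rewrite ge0_integral_fsum//; last 2 first.
  - move=> y; apply: emeasurable_funM => //; apply: measurable_funTS => //.
  - by move=> m y Ey; rewrite mule_ge0 ?nnfun_muleindic_ge0.
apply: eq_fsbigr => r rhn.
under [RHS]eq_integral do rewrite EFinM.
rewrite integralZl_indic_nnsfun => //.
under eq_integral do rewrite EFinM -muleA.
rewrite ge0_integralZl//.
- under eq_integral do rewrite muleC.
  rewrite (eq_integral (g \_ (h n @^-1` [set r]))); last first.
    by move=> x xE; rewrite epatch_indic.
  by rewrite -integral_mkcondr -hnu// integral_indic// setIC.
- apply: emeasurable_funM; first exact/measurable_EFinP.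
  exact/measurable_funTS.
- by move=> t Et; rewrite mule_ge0 ?lee_fin.
- by move: rhn; rewrite inE => -[t _ <-]; rewrite lee_fin.
Qed.
End dens.
Section uniq.
Context d (T : measurableType d) (R : realType).

Lemma uniq_dens (mu : {measure set T -> \bar R}) (u v : T -> R) :
  sigma_finite setT mu -> measurable_fun [set: T] u -> measurable_fun [set: T] v ->
  (forall A, measurable A -> \int[mu]_(x in A) (u x)%:E = \int[mu]_(x in A) (v x)%:E) ->
  {ae mu, forall x, u x = v x}.
Proof.
move=> /sigma_finiteP[F [FT ndF mF]] mu_ mv H.
pose D m := F m `&` [set x | `|u x| <= m%:R]%R `&` [set x | `|v x| <= m%:R]%R.
have mD1 m : measurable (F m `&` [set x | `|u x| <= m%:R]%R).
  apply: measurable_fun_le; first by case: (mF m).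
    by apply: measurableT_comp => //; exact: measurable_funS mu_.
  exact: (measurable_cst (m%:R : R)).
have mD : forall k, measurable (D k).
  move=> k; apply: measurable_fun_le => //.
    by apply: measurableT_comp => //; apply: measurable_funS mv.
have aeD m : ae_eq mu (D m) (EFin \o u) (EFin \o v).
  apply: integral_ae_eq => //.
  - apply/integrableP; split.
      by apply/measurable_EFinP; exact: measurable_funS mu_.
    apply: (@le_lt_trans _ _ (m%:R%:E * mu (D m))).
      apply: integral_le_bound => //.
        by apply/measurable_EFinP; exact: measurable_funS mu_.
      by apply: aeW => x [[_ ux] _]; rewrite /= lee_fin.
    apply: lte_mul_pinfty => //.
    rewrite (le_lt_trans _ (mF m).2)// le_measure// ?inE//.
      by case: (mF m).
    by move=> x [[]].
  - by apply/measurable_EFinP; exact: measurable_funS mv.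
  - by move=> A _ mA; exact: H.
apply: (negligibleS _ (negligible_bigcup aeD)).
move=> x /= uvx.
have : [set: T] x by [].
rewrite FT => -[i _ Fix].
pose m := maxn i (maxn (Num.trunc `|u x|).+1 (Num.trunc `|v x|).+1).
exists m => //= Dx; apply: uvx.
suff /Dx[] : D m x by [].
split; [split|].
- by have /subsetPset := ndF i m (leq_maxl _ _); apply.
- rewrite /= (le_trans (ltW (truncnS_gt _)))// ler_nat /m.
  by rewrite (leq_trans _ (leq_maxr _ _))// leq_maxl.
- rewrite /= (le_trans (ltW (truncnS_gt _)))// ler_nat /m.
  by rewrite (leq_trans _ (leq_maxr _ _))// leq_maxr.
Qed.
End uniq.
Section rhoid.
Context d (T : measurableType d) (R : realType) (G : groupType).
Variables mu1 mu2 : {measure set T -> \bar R}.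
Hypothesis sf2 : sigma_finite setT mu2.
Variable h : T -> R.
Hypothesis h0 : forall x, (0 < h x)%R.
Hypothesis mh : measurable_fun [set: T] h.
Hypothesis hd : forall A, measurable A -> mu1 A = \int[mu2]_(x in A) (h x)%:E.
Variable alpha : G -> T -> T.
Hypothesis amul : forall g k, alpha (monoid.mul g k) = alpha g \o alpha k.
Hypothesis aone : alpha monoid.one = id.
Hypothesis ma : forall g, measurable_fun [set: T] (alpha g).
Variables rho1 rho2 : G -> T -> R.
Hypothesis rn1 : forall g, is_RN_deriv mu1 (alpha g) (rho1 g).
Hypothesis rn2 : forall g, is_RN_deriv mu2 (alpha g) (rho2 g).

Lemma alpha_inv g x : alpha (monoid.inv g) (alpha g x) = x.
Proof. by have := congr1 (fun f => f x) (amul (monoid.inv g) g); rewrite mulVg aone /= => <-. Qed.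

Lemma rho_id g : {ae mu2, forall x,
  (rho2 g x * h (alpha (monoid.inv g) x) = h x * rho1 g x)%R}.
Proof.
have [mr1 r10 r1d] := rn1 g.
have [mr2 r20 r2d] := rn2 g.
have mhb : measurable_fun [set: T] (fun x => h (alpha (monoid.inv g) x)).
  exact: measurableT_comp mh (ma _).
have mpre A : measurable A -> measurable (alpha g @^-1` A).
  by move=> mA; rewrite -[X in measurable X]setTI; apply: ma.
apply: uniq_dens => //.
- exact: measurable_funM.
- exact: measurable_funM.
move=> A mA.
transitivity (mu1 (alpha g @^-1` A)); last first.
  rewrite r1d//.
  under [RHS]eq_integral do rewrite EFinM muleC.
  rewrite (@dens _ _ _ mu2 mu1 h (fun x => ltW (h0 x)) mh hd)//.
  exact/measurable_EFinP/measurable_funTS.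
under eq_integral do rewrite EFinM muleC.
rewrite (@dens _ _ _ mu2 (pushforward mu2 (alpha g)) (rho2 g) r20 mr2).
- rewrite ge0_integral_pushforward//.
  + rewrite hd ?mpre//.
    rewrite [LHS](_ : _ = \int[mu2]_(x in alpha g @^-1` A) (h x)%:E)//.
    by apply: eq_integral => x _; rewrite /= alpha_inv.
    exact: mpre.
  + exact/measurable_EFinP/measurable_funTS.
  + by move=> y _; rewrite lee_fin ltW.
- by move=> B mB; rewrite -r2d.
- by move=> x; rewrite lee_fin ltW.
- exact: mA.
- exact/measurable_EFinP/measurable_funTS.
Qed.
End rhoid.
Section lower.
Context d (T : measurableType d) (R : realType).
Variable mu : {measure set T -> \bar R}.
Import HBNNSimple.

Lemma LI (G : T -> \bar R) (c : \bar R) : (forall x, 0 <= G x) ->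
  (forall g : T -> \bar R, measurable_fun [set: T] g -> (forall x, 0 <= g x) ->
     (forall x, g x <= G x) -> \int[mu]_x g x <= c) ->
  \int[mu]_x G x <= c.
Proof.
move=> G0 H; rewrite ge0_integralTE//; apply: ge_ereal_sup => _ [s /= sG <-].
rewrite -integralT_nnsfun; apply: H => //.
  exact/measurable_EFinP/measurable_funP.
by move=> x; rewrite lee_fin.
Qed.

Lemma LI2 (g G : T -> \bar R) : measurable_fun [set: T] g -> (forall x, 0 <= g x) ->
  (forall x, g x <= G x) -> \int[mu]_x g x <= \int[mu]_x G x.
Proof.
move=> mh1 h10 h12.
have h20 x : 0 <= G x by exact: le_trans (h12 x).
pose g1 := nnsfun_approx measurableT mh1.
rewrite (@nd_ge0_integral_lim _ _ _ _ _ g1)//; last 2 first.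
  by move=> x m n mn; exact/lefP/nd_nnsfun_approx.
  by move=> x; exact: cvg_nnsfun_approx.
apply: lime_le.
  by apply: is_cvg_sintegral => // t m n mn; exact/lefP/nd_nnsfun_approx.
near=> n; rewrite ge0_integralTE//; apply: ereal_sup_ubound => /=.
exists (g1 n) => // t; rewrite (le_trans _ (h12 _))//.
have := leey (g t); rewrite le_eqVlt => /predU1P[->|ftoo].
  by rewrite leey.
have h1tfin : g t \is a fin_num.
  by rewrite fin_numE gt_eqF/= ?lt_eqF// (lt_le_trans _ (h10 t)).
have /= := @cvg_nnsfun_approx _ _ _ _ measurableT _ mh1 (fun x _ => h10 x) t Logic.I.
rewrite -(fineK h1tfin) => /fine_cvgP[ft_near].
set u_ := (X in X --> _) => u_h1.
have <- : lim u_ = fine (g t) by exact/cvg_lim.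
rewrite lee_fin; apply: nondecreasing_cvgn_le.
  by move=> // a b ab; rewrite /u_ /=; exact/lefP/nd_nnsfun_approx.
by apply/cvg_ex; eexists; exact: u_h1.
Unshelve. all: by end_near. Qed.

End lower.
Section transfer.
Context d (T : measurableType d) (R : realType).

Lemma ae_lower (mu : {measure set T -> \bar R}) (G G' : T -> \bar R) :
  (forall x, 0 <= G x) -> (forall x, 0 <= G' x) ->
  {ae mu, forall x, G x = G' x} -> \int[mu]_x G x = \int[mu]_x G' x.
Proof.
suff H (A B : T -> \bar R) : (forall x, 0 <= A x) -> (forall x, 0 <= B x) ->
  {ae mu, forall x, A x = B x} -> \int[mu]_x A x <= \int[mu]_x B x.
  move=> G0 G'0 GG; apply/le_anti; rewrite !H//.
  by case: GG => N [mN N0 sN]; exists N; split => // x /= nx; apply: sN => /= hx; apply: nx.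
move=> A0 B0 [N [mN N0 sN]]; apply: LI => // g mg g0 gA.
pose g' x := g x * (\1_(~` N) x)%:E.
have mg' : measurable_fun [set: T] g'.
  apply: emeasurable_funM => //; apply/measurable_EFinP; apply: measurable_indic.
  exact: measurableC.
have -> : \int[mu]_x g x = \int[mu]_x g' x.
  apply: ae_eq_integral => //; exists N; split => // x /= hx; apply: contra_notP hx => nNx _.
  by rewrite /g' indicE mem_set// mule1.
apply: LI2 => //.
  by move=> x; rewrite mule_ge0 ?lee_fin.
move=> x; rewrite /g' indicE; case: (boolP (x \in ~` N)) => [/set_mem nNx|_].
  rewrite mule1 (le_trans (gA x))//; have : ~ (~` [set x | A x = B x]) x.
    by move=> /sN.
  by move=> /contrapT ->.
by rewrite mule0.
Qed.

Lemma transfer (mu1 mu2 : {measure set T -> \bar R}) (h : T -> R) :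
  (forall x, 0 < h x)%R -> measurable_fun [set: T] h ->
  (forall A, measurable A -> mu1 A = \int[mu2]_(x in A) (h x)%:E) ->
  forall G : T -> \bar R, (forall x, 0 <= G x) ->
  \int[mu2]_x ((h x)%:E * G x) = \int[mu1]_x G x.
Proof.
move=> h0 mh hd G G0.
have h0' x : (0 <= h x)%R by exact: ltW.
have D (f : T -> \bar R) : (forall x, 0 <= f x) -> measurable_fun [set: T] f ->
    \int[mu2]_x (f x * (h x)%:E) = \int[mu1]_x f x.
  by move=> f0 mf; apply: dens.
have mhi : measurable_fun [set: T] (fun x => ((h x)^-1)%:E).
  rewrite (_ : (fun x => _) = (fun x => (h x `^ (-1))%:E)); last first.
    by apply/funext => x; rewrite powR_inv1.
  apply/measurable_EFinP; exact: (measurableT_comp (measurable_powR (-1)) mh).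
apply/le_anti/andP; split.
- apply: LI; first by move=> x; rewrite mule_ge0 ?lee_fin.
  move=> t mt t0 tG.
  have -> : \int[mu2]_x t x = \int[mu2]_x ((t x * ((h x)^-1)%:E) * (h x)%:E).
    apply: eq_integral => x _; rewrite -muleA -EFinM mulVf ?mule1//.
    by rewrite gt_eqF.
  rewrite D; last 2 first.
    by move=> x; rewrite mule_ge0 ?lee_fin ?invr_ge0.
    exact: emeasurable_funM.
  apply: LI2 => //.
    exact: emeasurable_funM.
    by move=> x; rewrite mule_ge0 ?lee_fin ?invr_ge0.
  move=> x; apply: le_trans (lee_wpmul2r _ (tG x)) _; first by rewrite lee_fin invr_ge0.
  by rewrite muleAC -EFinM mulfV ?gt_eqF// mul1e.
- apply: LI => // g mg g0 gG.
  rewrite -D//; apply: LI2.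
    by apply: emeasurable_funM => //; exact/measurable_EFinP.
    by move=> x; rewrite mule_ge0 ?lee_fin.
  by move=> x; rewrite muleC lee_wpmul2l ?lee_fin.
Qed.
End transfer.
Local Close Scope ereal_scope.
Section meas_scale.
Context d (T : measurableType d) (R : realType) (E : normedModType R).

Lemma ballE (x y : E) (r : R) : ball x r y = (`|x - y| < r).
Proof. by rewrite -ball_normE. Qed.

Lemma ballER (x y : R) (r : R) : ball x r y = (`|x - y| < r).
Proof. by rewrite -ball_normE. Qed.

Lemma borel_scale (phi : T -> R) (f : T -> E) :
  separable_space E -> measurable_fun [set: T] phi -> borel_measurable f ->
  borel_measurable (fun x => phi x *: f x).
Proof.
move=> [u du] mphi mf U oU.
pose r (m : nat) : R := (m.+1%:R)^-1.
have r0 m : 0 < r m by rewrite invr_gt0.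
pose S m n q := [set x | `|f x - u n| < r m] `&` [set x | `|phi x - ratr q| < r m].
pose good m n q := forall (c : R) (v : E), `|c - ratr q| < r m -> `|v - u n| < r m -> U (c *: v).
have -> : (fun x => phi x *: f x) @^-1` U =
    \bigcup_m \bigcup_n \bigcup_(q : rat) (if pselect (good m n q) then S m n q else set0).
  apply/seteqP; split => x /=; last first.
    move=> [m _ [n _ [q _]]]; case: pselect => //= g [fx px].
    by apply: g.
  move=> Ux.
  have : nbhs (phi x *: f x) U by apply: open_nbhs_nbhs; split.
  move=> /nbhs_ballP[del del0 bU].
  pose K := `|f x| + `|phi x| + 1.
  have K0 : 0 < K by rewrite ltr_pwDr// addr_ge0.
  pose m := ((Num.trunc (2 * K / del)).+2)%N.
  have m1 : 2 * r m <= 1.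
    by rewrite /r ler_pdivrMr// mul1r ler_nat /m.
  have m2 : 2 * r m * K < del.
    have hm : 2 * K / del < m.+1%:R.
      apply: lt_le_trans (truncnS_gt _) _; by rewrite ler_nat /m ltnS (leq_trans (leqnSn _) (leqnSn _)).
    move: hm; rewrite ltr_pdivrMr// => hm.
    by rewrite /r mulrAC ltr_pdivrMr// [del * _]mulrC.
  have [_ [[n _ <-] nfx]] : (range u `&` ball (f x) (r m)) !=set0.
    have : closure (range u) (f x) by rewrite du.
    by apply; exact: nbhsx_ballx.
  rewrite ballE in nfx.
  have [q] : exists q : rat, ratr q \in `](phi x - r m), (phi x + r m)[.
    by apply: rat_in_itvoo; rewrite ltrBlDr -addrA ltrDl addr_gt0.
  rewrite in_itv /= => /andP[q1 q2].
  have pq : `|phi x - ratr q| < r m.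
    rewrite ltr_norml; apply/andP; split; lra.
  exists m => //; exists n => //; exists q => //.
  case: pselect => /= [_|ng]; first by split.
  exfalso; apply: ng => c v cq vn; apply: bU; rewrite ballE.
  have cx : `|c - phi x| < 2 * r m.
    rewrite (le_lt_trans (ler_distD (ratr q) _ _))// mulr2n mulrDl mul1r.
    by rewrite ltrD// distrC.
  have vx : `|v - f x| < 2 * r m.
    rewrite (le_lt_trans (ler_distD (u n) _ _))// mulr2n mulrDl mul1r.
    by rewrite ltrD// distrC.
  rewrite distrC (_ : c *: v - phi x *: f x = (c - phi x) *: v + phi x *: (v - f x)); last first.
    by rewrite scalerBl scalerBr addrA subrK.
  apply: le_lt_trans (ler_normD _ _) _; rewrite !normrZ.
  apply: le_lt_trans m2.
  have vb : `|v| <= `|f x| + 1.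
    rewrite -(subrK (f x) v) (le_trans (ler_normD _ _))// addrC lerD2l.
    exact: (le_trans (ltW vx)).
  have h1 := normr_ge0 (c - phi x); have h2 := normr_ge0 (v - f x).
  have h3 := normr_ge0 (phi x); have h4 := normr_ge0 (f x); have h5 := normr_ge0 v.
  rewrite /K; nra.
apply: bigcupT_measurable => m; apply: bigcupT_measurable => n.
apply: bigcupT_measurable_rat => q; case: (pselect (good m n q)) => [_|_] /=; last exact: measurable0.
apply: measurableI.
  have -> : [set x | `|f x - u n| < r m] = f @^-1` ball (u n) (r m).
    by apply/seteqP; split => x /=; rewrite ballE distrC.
  exact/mf/ball_open.
have -> : [set x | `|phi x - ratr q| < r m] = phi @^-1` ball (ratr q : R) (r m).
  by apply/seteqP; split => x /=; rewrite ballER distrC.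
rewrite -[X in measurable X]setTI; apply: mphi => //.
exact: (open_measurable (ball_open (ratr q : R) (r m))).
Qed.
End meas_scale.
Local Open Scope ereal_scope.
Section aeall.
Context d (T : measurableType d) (R : realType).
Lemma ae_all (mu : {measure set T -> \bar R}) (I : eqType) (s : seq I) (P : I -> T -> Prop) :
  (forall i, i \in s -> {ae mu, forall x, P i x}) ->
  {ae mu, forall x, forall i, i \in s -> P i x}.
Proof.
elim: s => [|i s IH] H.
  by apply: aeW => x i; rewrite in_nil.
have Hi := H i (mem_head _ _).
have Hs : {ae mu, forall x, forall j, j \in s -> P j x}.
  by apply: IH => j js; apply: H; rewrite in_cons js orbT.
apply: (negligibleS _ (negligibleU Hi Hs)) => x /= nall.
have [pi|npi] := pselect (P i x); last by left.
right => ps; apply: nall => j.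
by rewrite in_cons => /orP[/eqP ->//|]; exact: ps.
Qed.
End aeall.

Local Close Scope ereal_scope.
Section oneway.
Context (R : realType) (p : R) (E : normedModType R)
    (d : measure_display) (Omega : measurableType d)
    (mu1 mu2 : {measure set Omega -> \bar R})
    (G : groupType) (alpha : G -> Omega -> Omega) (rho1 rho2 : G -> Omega -> R).
Hypothesis p0 : 0 < p.
Hypothesis sepE : separable_space E.
Hypothesis sf2 : sigma_finite setT mu2.
Variable h : Omega -> R.
Hypothesis h0 : forall x, (0 < h x)%R.
Hypothesis mh : measurable_fun [set: Omega] h.
Hypothesis hd : forall A, measurable A -> mu1 A = (\int[mu2]_(x in A) (h x)%:E)%E.
Hypothesis amul : forall g k, alpha (monoid.mul g k) = alpha g \o alpha k.
Hypothesis aone : alpha monoid.one = id.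
Hypothesis ma : forall g, measurable_fun [set: Omega] (alpha g).
Hypothesis rn1 : forall g, is_RN_deriv mu1 (alpha g) (rho1 g).
Hypothesis rn2 : forall g, is_RN_deriv mu2 (alpha g) (rho2 g).

Let phi x := h x `^ p^-1.
Let phi0 x : (0 <= phi x)%R. Proof. exact: powR_ge0. Qed.
Let mphi : measurable_fun [set: Omega] phi.
Proof. exact: (measurableT_comp (measurable_powR _) mh). Qed.

Lemma KL (F1 F2 : Omega -> E) : {ae mu2, forall x, F2 x = phi x *: F1 x} ->
  Lpnorm mu2 p F2 = Lpnorm mu1 p F1.
Proof.
move=> ae; rewrite /Lpnorm unlock /=; congr (_ `^ _)%E.
rewrite -(@transfer _ _ _ mu1 mu2 h h0 mh hd (fun x => ((Num.norm (Num.norm (F1 x))) `^ p)%:E)); last first.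
  by move=> x; rewrite lee_fin powR_ge0.
apply: ae_lower.
- by move=> x; rewrite lee_fin powR_ge0.
- by move=> x; rewrite mule_ge0 ?lee_fin ?powR_ge0// ltW.
apply: negligibleS ae => x /= nx ex; apply: nx; rewrite ex.
rewrite -EFinM !normr_id normrZ ger0_norm//.
rewrite powRM// /phi -powRrM mulVf ?gt_eqF// powRr1//; exact: ltW.
Qed.

Lemma lin_scale (b : Omega -> E -> E) x :
  (forall (c : R) (u v : E), b x (c *: u + v) = c *: b x u + b x v) ->
  forall (c : R) (w : E), b x (c *: w) = c *: b x w.
Proof.
move=> lin c w.
have z : b x 0 = 0.
  have := lin 1 0 0; rewrite scaler0 addr0 scale1r => /esym /eqP.
  by rewrite -subr_eq0 addrK => /eqP.
by have := lin c w 0; rewrite addr0 z addr0.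
Qed.

Lemma oneway (s : seq G) (a : G -> Omega -> E -> E) :
  (forall g, g \in s -> forall x (c : R) (u v : E), a g x (c *: u + v) = c *: a g x u + a g x v) ->
  (Lp_opnorm mu1 p (cross_op p alpha rho1 s a) <= Lp_opnorm mu2 p (cross_op p alpha rho2 s a))%E.
Proof.
move=> lin.
have good := ae_all (fun g _ => rho_id sf2 h0 mh hd amul aone ma rn1 rn2 g) (s := s).
apply: ge_ereal_sup => _ [f [[bf ff] f1] <-].
pose f2 x := phi x *: f x.
have Ef : Lpnorm mu2 p f2 = Lpnorm mu1 p f by apply: KL; exact: aeW.
apply: ereal_sup_ubound; exists f2.
  split; last by rewrite Ef.
  split; last by rewrite Ef.
  exact: borel_scale.
apply: KL; apply: negligibleS good => x /= nx ex; apply: nx.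
rewrite /cross_op scaler_sumr; apply: eq_big_seq => g gs.
have [mr1 r10 _] := rn1 g; have [mr2 r20 _] := rn2 g.
rewrite /f2 scalerA.
have -> : (rho2 g x `^ p^-1 * phi (alpha (monoid.inv g) x) = phi x * rho1 g x `^ p^-1)%R.
  by rewrite /phi -powRM// ?ltW// ex// powRM// ltW.
by rewrite -scalerA (lin_scale (lin g gs x)).
Qed.
End oneway.
Local Open Scope ereal_scope.
Section dexists.
Context d (T : measurableType d) (R : realType).
Variables mu1 mu2 : {measure set T -> \bar R}.
Hypothesis sf1 : sigma_finite setT mu1.
Hypothesis sf2 : sigma_finite setT mu2.
Hypothesis hnull : forall A, measurable A -> (mu1 A = 0 <-> mu2 A = 0).

Definition mus : set T -> \bar R := mu2.
HB.instance Definition _ := Measure.on mus.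
HB.instance Definition _ := Measure_isSigmaFinite.Build _ _ _ mus sf2.

Lemma int_mus (A : set T) (f : T -> \bar R) :
  \int[mus]_(x in A) f x = \int[mu2]_(x in A) f x.
Proof. reflexivity. Qed.

Lemma dens_exists : exists h : T -> R, [/\ forall x, (0 < h x)%R,
  measurable_fun [set: T] h &
  forall A, measurable A -> mu1 A = \int[mu2]_(x in A) (h x)%:E].
Proof.
have [F FT mF] := sf1.
pose E := seqDU F.
have mE k : measurable (E k).
  apply: measurableD; first by case: (mF k).
  by apply: bigsetU_measurable => i _; case: (mF i).
have muEoo k : mu1 (E k) < +oo.
  rewrite (le_lt_trans _ (mF k).2)// le_measure// ?inE//; first by case: (mF k).
  exact: subDsetl.
have UET : \bigcup_i E i = [set: T] by rewrite FT [RHS]seqDU_bigcup_eq.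
have tE := @trivIset_seqDU _ F.
have rn k : exists f : T -> \bar R, [/\ forall x, 0 <= f x, forall x, f x \is a fin_num,
    mus.-integrable [set: T] f &
    forall A, measurable A -> mfrestr (mE k) (muEoo k) A = \int[mus]_(x in A) f x].
  apply: radon_nikodym_sigma_finite => N N0 A mA AN.
  have A0 : mu2 A = 0 := N0 A mA AN.
  rewrite /= /mfrestr /mrestr; apply/hnull; first exact: measurableI.
  apply/eqP; rewrite -measure_le0 -A0 le_measure// ?inE//; exact: measurableI.
have [f hf] := choice rn.
pose H x := \sum_(k <oo) ((\1_(E k) x)%:E * f k x).
have f0 k x : 0 <= f k x by case: (hf k).
have mf k : measurable_fun [set: T] (f k).
  by case: (hf k) => _ _ /integrableP[]. 
have H0 x : 0 <= H x by apply: nneseries_ge0 => k _; rewrite mule_ge0 ?lee_fin.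
have mH : measurable_fun [set: T] H.
  apply: ge0_emeasurable_sum; first by move=> k x _ _; rewrite mule_ge0 ?lee_fin.
  move=> k _; apply: emeasurable_funM => //; apply/measurable_EFinP; exact: measurable_indic.
have HA A : measurable A -> \int[mu2]_(x in A) H x = mu1 A.
  move=> mA; rewrite integral_nneseries//; last 2 first.
    move=> k; apply: emeasurable_funM; last exact: measurable_funTS.
    by apply/measurable_EFinP; exact: measurable_indic.
    by move=> k x _; rewrite mule_ge0 ?lee_fin.
  transitivity (\sum_(k <oo) mu1 (A `&` E k)).
    apply: eq_eseriesr => k _.
    transitivity (\int[mu2]_(x in A) (f k \_ (E k)) x).
      by apply: eq_integral => x _; rewrite epatch_indic /= muleC.
    rewrite -integral_mkcondr -int_mus.
    have [_ _ _ <-] := hf k; last exact: measurableI.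
    by rewrite /mfrestr /mrestr -setIA setIid.
  rewrite -measure_semi_bigcup.
  - by rewrite -setI_bigcupr UET setIT.
  - by move=> k; exact: measurableI.
  - apply/trivIsetP => i j _ _ ij; rewrite setIACA setIid.
    by move/trivIsetP : tE => /(_ i j Logic.I Logic.I ij) ->; rewrite setI0.
  - by apply: bigcupT_measurable => k; exact: measurableI.
pose Z := H @^-1` [set 0].
pose I := H @^-1` [set +oo].
have mZ : measurable Z by rewrite -[Z]setTI; exact: mH.
have mI : measurable I by rewrite -[I]setTI; exact: mH.
have Z0 : mu2 Z = 0.
  apply/hnull => //; rewrite -HA//; apply: integral0_eq => x; exact.
have I0 : mu2 I = 0.
  have -> : I = \bigcup_k (I `&` F k) by rewrite -setI_bigcupr -FT setIT.
  have mIF k : measurable (I `&` F k) by apply: measurableI => //; case: (mF k).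
  apply/eqP; rewrite -measure_le0.
  apply: (le_trans (@measure_sigma_subadditive _ _ _ mu2 _ (fun k => I `&` F k) mIF _ _)) => //.
    exact: bigcupT_measurable.
  rewrite eseries0// => k _ _.
  have : mu1 (I `&` F k) < +oo.
    by rewrite (le_lt_trans _ (mF k).2)// le_measure// ?inE//; case: (mF k).
  rewrite -HA ?mIF// (eq_integral (cst +oo)); last by move=> x /[!inE] -[].
  rewrite integral_cst//.
  have [->//|] := eqVneq (mu2 (I `&` F k)) 0.
  by rewrite -measure_gt0 => /gt0_mulye ->.
pose h x := (fine (H x) + \1_(Z `|` I) x)%R.
exists h; split.
- move=> x; rewrite /h indicE; case: (boolP (x \in Z `|` I)) => [_|].
    by rewrite ltr_pwDr// fine_ge0.
  rewrite in_setU negb_or => /andP[xZ xI]; rewrite addr0.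
  rewrite fine_gt0// lt0e -{1}/(H x) H0 andbT ltey.
  apply/andP; split; apply/negP => /eqP hx.
    by move/negP : xZ; apply; rewrite inE.
  by move/negP : xI; apply; rewrite inE.
- apply: measurable_funD; last by apply: measurable_indic; exact: measurableU.
  by apply: measurableT_comp => //; exact: fine_measurable.
- move=> A mA; rewrite -HA//; apply: ae_eq_integral => //.
  + exact: measurable_funTS.
  + apply/measurable_EFinP; apply: measurable_funTS; apply: measurable_funD.
      by apply: measurableT_comp => //; exact: fine_measurable.
    by apply: measurable_indic; exact: measurableU.
  + exists (Z `|` I); split; first exact: measurableU.
      apply/eqP; rewrite eq_le measure_ge0 andbT (le_trans (measureU2 mu2 mZ mI))//.
      by rewrite [leLHS](_ : _ = mu2 Z + mu2 I :> \bar R)// Z0 I0 adde0.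
    move=> x /= /not_implyP[_ hx]; apply: contra_notP hx => /not_orP[xZ xI].
    rewrite /h indicE memNset ?addr0; last by move=> [].
    rewrite fineK// ge0_fin_numE// ltey; apply/eqP => hx; exact: xI.
Qed.
End dexists.
Local Close Scope ereal_scope.
Theorem mainTheorem11 (R : realType) (p : R) (E : completeNormedModType R)
    (d : measure_display) (Omega : measurableType d)
    (mu1 mu2 : {measure set Omega -> \bar R})
    (G : groupType) (alpha : G -> Omega -> Omega) (rho1 rho2 : G -> Omega -> R) :
  1 < p ->
  separable_space E ->
  sigma_finite setT mu1 -> sigma_finite setT mu2 ->
  separable_measure mu1 -> separable_measure mu2 ->
  (forall A, measurable A -> (mu1 A = 0%E <-> mu2 A = 0%E)) ->
  countable [set: G] -> amenable (R := R) G ->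
  (forall g h, alpha (monoid.mul g h) = alpha g \o alpha h) -> alpha monoid.one = id ->
  (forall g, measurable_fun setT (alpha g)) ->
  (forall g A, measurable A -> mu1 A = 0%E -> mu1 (alpha g @^-1` A) = 0%E) ->
  metrically_free mu1 alpha ->
  (forall g, is_RN_deriv mu1 (alpha g) (rho1 g)) ->
  (forall g, is_RN_deriv mu2 (alpha g) (rho2 g)) ->
  forall (s : seq G) (a : G -> Omega -> E -> E),
    uniq s -> (forall g, g \in s -> in_Linf_op mu1 (a g)) ->
    Lp_opnorm mu1 p (cross_op p alpha rho1 s a) =
    Lp_opnorm mu2 p (cross_op p alpha rho2 s a).
Proof.
move=> p1 sepE sf1 sf2 _ _ hnull _ _ amul aone ma _ _ rn1 rn2 s a _ ha.
have p0 : 0 < p by exact: lt_trans ltr01 p1.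
have lin g : g \in s -> forall x (c : R) (u v : E),
    a g x (c *: u + v) = c *: a g x u + a g x v.
  by move=> gs; have [] := ha g gs.
have [h12 [h12p mh12 hd12]] := dens_exists sf1 sf2 hnull.
have hnull' : forall A, measurable A -> (mu2 A = 0%E <-> mu1 A = 0%E).
  by move=> A mA; split => /(hnull A mA).
have [h21 [h21p mh21 hd21]] := dens_exists sf2 sf1 hnull'.
apply/le_anti/andP; split.
- exact: (oneway p0 sepE sf2 h12p mh12 hd12 amul aone ma rn1 rn2 lin).
- exact: (oneway p0 sepE sf1 h21p mh21 hd21 amul aone ma rn2 rn1 lin).
Qed.
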